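(* Let $\eta\in\mathbb{F}_{2^n}$ with $\mathbb{F}_{2^n}=\mathbb{F}_2(\eta)$, let $m\in\mathbb{N}$ and let $M_1,\dots,M_n$ satisfy $\emptyset\neq M_i\subsetneq[m]$ for $1\le i\le n$. Let $D=\Delta_{M_1}+\eta\Delta_{M_2}+\cdots+\eta^{n-1}\Delta_{M_n}\subseteq\mathbb{F}_{2^n}^m$ and $D^*=D\setminus\{0\}$. Then $C_{D^*}$ is a linear code over $\mathbb{F}_{2^n}$ of length $2^{\sum_{j=1}^n|M_j|}-1$ and dimension $|\bigcup_{j=1}^nM_j|$. If $A_i$ denotes the number of codewords of $C_{D^*}$ of weight $i$ and $Z_i=|\{v\in\mathbb{F}_{2^n}^m: wt(c_{D^*}(v))=i\}|$ for $0\le i\le|D^*|$, then $Z_0=2^{n(m-|\bigcup_{j=1}^nM_j|)}$ and $Z_i=Z_0A_i$ for $1\le i\le|D^*|$.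
   Context: $[m]=\{1,\dots,m\}$; $\Delta_L=\{w\in\mathbb{F}_2^m:\{i:w_i\ne0\}\subseteq L\}$. $\Delta_{M_1}+\eta\Delta_{M_2}+\cdots+\eta^{n-1}\Delta_{M_n}=\{d_1+\eta d_2+\cdots+\eta^{n-1}d_n: d_i\in\Delta_{M_i}\}$. For an ordered finite set $P\subseteq\mathbb{F}_{2^n}^m$, $c_P(v)=(v\cdot d)_{d\in P}$ with $v\cdot d=\sum_iv_id_i$, and $C_P=\{c_P(v):v\in\mathbb{F}_{2^n}^m\}$. *)

(* Defs.v *)
From HB Require Import structures.
From mathcomp Require Import all_boot all_order all_algebra.
Set Implicit Arguments. Unset Strict Implicit. Unset Printing Implicit Defensive.
Import GRing.Theory.
Local Open Scope ring_scope.

(* F_2(eta) = F : F is the smallest subfield of F containing eta, i.e. every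
   subset of F closed under the field operations and containing eta is all of F. *)
Definition generates_field (F : fieldType) (eta : F) : Prop :=
  forall S : {pred F},
    0 \in S -> 1 \in S ->
    {in S &, forall a b, a + b \in S} ->
    {in S &, forall a b, a * b \in S} ->
    {in S, forall a, - a \in S} ->
    {in S, forall a, a^-1 \in S} ->
    eta \in S -> forall x, x \in S.

Definition embF2 (F : fieldType) (x : 'F_2) : F := (nat_of_ord x)%:R.

Definition Delta (m : nat) (L : {set 'I_m}) : {set 'rV['F_2]_m} :=
  [set w : 'rV['F_2]_m | [forall j, (w 0 j != 0) ==> (j \in L)]].

(* D = Delta_{M_1} + eta Delta_{M_2} + ... + eta^{n-1} Delta_{M_n} (indices 0-based) *)
Definition Dset (F : finFieldType) (n m : nat) (eta : F) (M : 'I_n -> {set 'I_m})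
  : {set 'rV[F]_m} :=
  [set v : 'rV[F]_m | [exists d : {ffun 'I_n -> 'rV['F_2]_m},
      [forall i, d i \in Delta (M i)] &&
      (v == \sum_(i < n) eta ^+ i *: map_mx (@embF2 F) (d i))]].

Definition Dstar (F : finFieldType) (n m : nat) (eta : F) (M : 'I_n -> {set 'I_m})
  : {set 'rV[F]_m} := Dset eta M :\ 0.

Definition cP (F : finFieldType) (m : nat) (P : {set 'rV[F]_m}) (v : 'rV[F]_m)
  : 'rV[F]_#|P| :=
  \row_(k < #|P|) \sum_(j < m) v 0 j * (enum_val k : 'rV[F]_m) 0 j.

Definition codeP (F : finFieldType) (m : nat) (P : {set 'rV[F]_m})
  : {set 'rV[F]_#|P|} := [set cP P v | v : 'rV[F]_m].

Definition wt (F : finFieldType) (N : nat) (c : 'rV[F]_N) : nat :=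
  #|[set k : 'I_N | c 0 k != 0]|.

(* Main.v *)
Require Import Defs.
From HB Require Import structures.
From mathcomp Require Import all_boot all_order all_algebra all_field.
From mathcomp Require Import zify.
Import GRing.Theory.
Local Open Scope ring_scope.
Set Implicit Arguments. Unset Strict Implicit.

Lemma char2 (F : finFieldType) n : #|F| = (2^n)%N -> (2%:R : F) = 0.
Proof.
move=> HF; have := card_finPcharP HF (isT : prime 2).
by rewrite inE => /andP[_ /eqP].
Qed.

Lemma oppr2 (F : finFieldType) (h2 : (2%:R : F) = 0) (z : F) : - z = z.
Proof.
apply/eqP; rewrite eq_sym -subr_eq0 opprK -mulr2n -mulr_natr h2 mulr0 //.
Qed.

Lemma addb_nat (F : finFieldType) (h2 : (2%:R : F) = 0) (a b : bool) :
  ((a (+) b)%:R : F) = a%:R + b%:R.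
Proof. by case: a; case: b; rewrite /= ?add0r ?addr0 // -natrD h2. Qed.

Definition SS (F : finFieldType) (eta : F) (d : nat) : {set F} :=
  [set \sum_(i < d) eta ^+ i * (a i)%:R | a : {ffun 'I_d -> bool}].

Lemma SS_in (F : finFieldType) (eta : F) d (a : 'I_d -> bool) :
  \sum_(i < d) eta ^+ i * (a i)%:R \in SS eta d.
Proof.
apply/imsetP; exists [ffun i => a i] => //; apply: eq_bigr => i _; by rewrite ffunE.
Qed.

Lemma SS_0 (F : finFieldType) (eta : F) d : 0 \in SS eta d.
Proof.
apply/imsetP; exists [ffun=> false] => //.
by rewrite big1 // => i _; rewrite ffunE mulr0.
Qed.

Lemma SS_add (F : finFieldType) (h2 : (2%:R : F) = 0) (eta : F) d x y :
  x \in SS eta d -> y \in SS eta d -> x + y \in SS eta d.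
Proof.
move=> /imsetP[a _ ->] /imsetP[b _ ->].
rewrite -big_split /=.
suff -> : \sum_(i < d) (eta ^+ i * (a i)%:R + eta ^+ i * (b i)%:R) =
  \sum_(i < d) eta ^+ i * (a i (+) b i)%:R by apply: SS_in.
by apply: eq_bigr => i _; rewrite addb_nat // mulrDr.
Qed.

Lemma SS_bool (F : finFieldType) (eta : F) d x (b : bool) :
  x \in SS eta d -> x * b%:R \in SS eta d.
Proof. by case: b => Hx; rewrite ?mulr1 ?mulr0 ?SS_0. Qed.

Lemma SS_sum (F : finFieldType) (h2 : (2%:R : F) = 0) (eta : F) d
   (I : finType) (f : I -> F) :
  (forall i, f i \in SS eta d) -> \sum_i f i \in SS eta d.
Proof.
move=> H; apply: (big_ind (fun x => x \in SS eta d)) => //.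
  exact: SS_0.
move=> x y; exact: SS_add.
Qed.

Lemma SS_lt (F : finFieldType) (eta : F) d j : (j < d)%N -> eta ^+ j \in SS eta d.
Proof.
move=> lt; have := SS_in eta (fun i : 'I_d => i == Ordinal lt).
rewrite (bigD1 (Ordinal lt)) //= eqxx mulr1 big1 ?addr0 // => i /negbTE ->.
by rewrite mulr0.
Qed.

Lemma SS_eta (F : finFieldType) (h2 : (2%:R : F) = 0) (eta : F) d x :
  eta ^+ d \in SS eta d -> x \in SS eta d -> eta * x \in SS eta d.
Proof.
move=> Hd /imsetP[a _ ->]; rewrite mulr_sumr.
apply: SS_sum => // i; rewrite mulrA -exprS.
apply: SS_bool; case: (ltnP i.+1 d) => [lt|]; first exact: SS_lt.
by rewrite leq_eqVlt ltnNge ltn_ord orbF => /eqP <-.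
Qed.

Lemma SS_etaj (F : finFieldType) (h2 : (2%:R : F) = 0) (eta : F) d j :
  eta ^+ d \in SS eta d -> eta ^+ j \in SS eta d.
Proof.
move=> Hd; case: (ltnP j d) => [lt|]; first exact: SS_lt.
move/subnK <-; elim: (j - d)%N => [|k IH]; first by rewrite add0n.
by rewrite addSn exprS; apply: SS_eta.
Qed.

Lemma SS_mul (F : finFieldType) (h2 : (2%:R : F) = 0) (eta : F) d x y :
  eta ^+ d \in SS eta d -> x \in SS eta d -> y \in SS eta d -> x * y \in SS eta d.
Proof.
move=> Hd Hx /imsetP[b _ ->]; rewrite mulr_sumr.
apply: SS_sum => // i; rewrite mulrA; apply: SS_bool.
elim: (nat_of_ord i) => [|k IH]; first by rewrite mulr1.
by rewrite exprS mulrCA; apply: SS_eta.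
Qed.

Lemma SS_exp (F : finFieldType) (h2 : (2%:R : F) = 0) (eta : F) d x k :
  eta ^+ d \in SS eta d -> x \in SS eta d -> x ^+ k \in SS eta d.
Proof.
move=> Hd Hx; elim: k => [|k IH].
  by rewrite expr0 -(expr0 eta); apply: SS_etaj.
by rewrite exprS; apply: SS_mul.
Qed.

Lemma invf_pow (F : finFieldType) (x : F) : x != 0 -> x^-1 = x ^+ (#|F|.-2).
Proof.
move=> xn0.
apply: (mulfI xn0); rewrite divff //; apply: (mulfI xn0).
rewrite mulr1 mulrA -expr2 -exprD /=.
have gt1 : (1 < #|F|)%N by exact: card_finNzRing_gt1.
move: (expf_card x); case: #|F| gt1 => [|[|q]] //= _ ->.
Qed.

Lemma key (F : finFieldType) n (eta : F) d :
  #|F| = (2 ^ n)%N -> generates_field eta -> (d < n)%N -> eta ^+ d \notin SS eta d.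
Proof.
move=> HF Heta ltdn; apply/negP => Hd.
have h2 := char2 HF.
have all : forall x, x \in SS eta d.
  move=> x; have := Heta [pred x | x \in SS eta d]; rewrite !inE; apply.
  - exact: SS_0.
  - by rewrite -(expr0 eta); apply: SS_etaj.
  - by move=> a b; rewrite !inE; apply: SS_add.
  - by move=> a b; rewrite !inE; apply: SS_mul.
  - by move=> a; rewrite !inE oppr2.
  - move=> a; rewrite !inE => Ha; have [->|an0] := eqVneq a 0; first by rewrite invr0 SS_0.
    by rewrite invf_pow //; apply: SS_exp.
  - by rewrite -(expr1 eta); apply: SS_etaj.
have : (#|F| <= 2 ^ d)%N.
  apply: leq_trans (_ : #|SS eta d| <= _)%N.
    by rewrite -cardsT subset_leq_card //; apply/subsetP => x _; apply: all.
  apply: leq_trans (leq_imset_card _ _) _.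
  by rewrite card_ffun card_bool card_ord.
by rewrite HF leq_exp2l // leqNgt ltdn.
Qed.

Lemma swap_eq (V : zmodType) (A B x y : V) : A + x = B + y -> x - y = B - A.
Proof. by move=> E; apply: (addrI A); rewrite addrA E addrK [A + _]addrC subrK. Qed.

Lemma indep (F : finFieldType) n (eta : F) :
  #|F| = (2 ^ n)%N -> generates_field eta ->
  forall d, (d <= n)%N -> forall a b : 'I_d -> bool,
  \sum_(i < d) eta ^+ i * (a i)%:R = \sum_(i < d) eta ^+ i * (b i)%:R ->
  forall i, a i = b i.
Proof.
move=> HF Heta; have h2 := char2 HF.
elim=> [|d IH] led a b; first by move=> _ [].
rewrite !big_ord_recr /=.
have [eqab|neab] := eqVneq (a ord_max) (b ord_max).
  rewrite eqab => /addIr E i.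
  have IH' := IH (ltnW led) _ _ E.
  case: (ltnP i d) => [lt|ge].
    by have := IH' (Ordinal lt); congr (a _ = b _); apply: val_inj.
  have -> : i = ord_max by apply: val_inj; apply/eqP; rewrite eqn_leq ge -ltnS ltn_ord.
  exact: eqab.
move=> E; exfalso.
have := key HF Heta led; apply/negP.
have -> : eta ^+ d = eta ^+ d * (a ord_max)%:R + eta ^+ d * (b ord_max)%:R.
  rewrite -mulrDr -addb_nat //; move: neab; by case: (a _); case: (b _); rewrite /= ?mulr1 ?mulr0 ?addr0 ?add0r.
have E2 : eta ^+ d * (a ord_max)%:R - eta ^+ d * (b ord_max)%:R =
   \sum_(i < d) eta ^+ i * (b (widen_ord (leqnSn d) i))%:R -
   \sum_(i < d) eta ^+ i * (a (widen_ord (leqnSn d) i))%:R.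
  by apply: swap_eq.
rewrite -[_ * (b _)%:R]oppr2 // E2 oppr2 //.
by rewrite negbK; apply: SS_add => //; apply: SS_in.
Qed.

Lemma F2cases (x : 'F_2) : x = 0 \/ x = 1.
Proof. case: x => [[|[|x]] Hx] //; [left|right]; exact: val_inj. Qed.

Lemma embF2E (F : fieldType) (x : 'F_2) : embF2 F x = (x != 0)%:R.
Proof. by case: (F2cases x) => ->. Qed.

Definition Xs n m (M : 'I_n -> {set 'I_m}) : {set 'I_n * 'I_m} :=
  [set p | p.2 \in M p.1].

Definition hS (F : finFieldType) n m (eta : F) (S : {set 'I_n * 'I_m}) : 'rV[F]_m :=
  \row_j \sum_(i < n) eta ^+ i * ((i, j) \in S)%:R.

Lemma Dset_eq (F : finFieldType) n m (eta : F) (M : 'I_n -> {set 'I_m}) :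
  Dset eta M = [set hS eta S | S in powerset (Xs M)].
Proof.
apply/setP => v; rewrite inE; apply/existsP/imsetP.
  case=> d /andP[/forallP Hd /eqP ->].
  exists [set p | d p.1 0 p.2 != 0].
    rewrite powersetE; apply/subsetP => p; rewrite !inE => nz.
    by move: (Hd p.1); rewrite inE => /forallP /(_ p.2) /implyP; apply.
  apply/rowP => j; rewrite !mxE summxE; apply: eq_bigr => i _.
  by rewrite !mxE inE /= embF2E.
case=> S; rewrite powersetE => /subsetP HS ->.
exists [ffun i => \row_j (((i, j) \in S)%:R : 'F_2)]; apply/andP; split.
  apply/forallP => i; rewrite inE; apply/forallP => j; apply/implyP.
  rewrite ffunE mxE; case: (boolP ((i, j) \in S)) => // /HS.
  by rewrite inE.
apply/eqP/rowP => j; rewrite !mxE summxE; apply: eq_bigr => i _.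
by rewrite !mxE ffunE mxE embF2E; case: ((i, j) \in S).
Qed.

Lemma hS_inj (F : finFieldType) n m (eta : F) :
  #|F| = (2 ^ n)%N -> generates_field eta -> injective (@hS F n m eta).
Proof.
move=> HF Heta S S' E; apply/setP => [[i j]].
have Ej : \sum_(i < n) eta ^+ i * ((i, j) \in S)%:R = \sum_(i < n) eta ^+ i * ((i, j) \in S')%:R.
  by have := congr1 (fun v : 'rV[F]_m => v 0 j) E; rewrite !mxE.
exact: (indep HF Heta (leqnn n) Ej).
Qed.

Lemma card_Xs n m (M : 'I_n -> {set 'I_m}) : #|Xs M| = (\sum_(i < n) #|M i|)%N.
Proof.
rewrite (eq_bigr (fun i => \sum_(j | j \in M i) 1)%N); last by move=> i _; rewrite sum1_card.
rewrite pair_big_dep /= -sum1_card; apply: eq_bigl => p; by rewrite inE.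
Qed.

Lemma zero_Dset (F : finFieldType) n m (eta : F) (M : 'I_n -> {set 'I_m}) :
  0 \in Dset eta M.
Proof.
rewrite Dset_eq; apply/imsetP; exists set0; first by rewrite powersetE sub0set.
by apply/rowP => j; rewrite !mxE big1 // => i _; rewrite inE mulr0.
Qed.

Lemma card_Ds (F : finFieldType) n m (eta : F) (M : 'I_n -> {set 'I_m}) :
  #|F| = (2 ^ n)%N -> generates_field eta ->
  #|Dstar eta M| = (2 ^ (\sum_(j < n) #|M j|) - 1)%N.
Proof.
move=> HF Heta; have := cardsD1 0 (Dset eta M); rewrite zero_Dset /Dstar => E.
rewrite (_ : #|Dset eta M :\ 0%R| = #|Dset eta M| - 1)%N; last by rewrite E add1n subn1.
rewrite Dset_eq card_imset; last exact: hS_inj.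
by rewrite card_powerset card_Xs.
Qed.

Lemma Dset_supp (F : finFieldType) n m (eta : F) (M : 'I_n -> {set 'I_m}) v j :
  v \in Dset eta M -> j \notin \bigcup_(i < n) M i -> v 0 j = 0.
Proof.
rewrite Dset_eq => /imsetP[S]; rewrite powersetE => /subsetP HS -> jU.
rewrite mxE big1 // => i _; case: (boolP ((i, j) \in S)); last by rewrite mulr0.
move/HS; rewrite inE /= => ji; case/negP: jU; apply/bigcupP; by exists i.
Qed.

Lemma delta_Dset (F : finFieldType) n m (eta : F) (M : 'I_n -> {set 'I_m}) i j :
  j \in M i -> eta ^+ i *: delta_mx 0 j \in Dset eta M.
Proof.
move=> ji; rewrite inE; apply/existsP.
exists [ffun i' => if i' == i then delta_mx 0 j else 0]; apply/andP; split.
  apply/forallP => i'; rewrite ffunE inE; apply/forallP => j'; apply/implyP.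
  case: (i' =P i) => [->|_]; last by rewrite mxE eqxx.
  by rewrite mxE /=; case: (j' =P j) => [->|] //; rewrite andbF eqxx.
apply/eqP; rewrite (bigD1 i) //= big1 ?addr0.
  rewrite ffunE eqxx; congr (_ *: _); apply/matrixP => a b; rewrite !mxE embF2E.
  by case: (_ && _).
move=> i' /negbTE; rewrite ffunE => ->.
by apply/matrixP => a b; rewrite !mxE embF2E eqxx mulr0.
Qed.

Lemma eta_neq0 (F : finFieldType) n (eta : F) i :
  #|F| = (2 ^ n)%N -> generates_field eta -> (i < n)%N -> eta ^+ i != 0.
Proof.
move=> HF Heta lt; apply/negP => /eqP E.
have := @indep F n eta HF Heta n (leqnn n) (fun j : 'I_n => j == Ordinal lt) (fun _ => false).
rewrite (bigD1 (Ordinal lt)) //= eqxx mulr1 E add0r.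
rewrite big1; last by move=> j /negbTE ->; rewrite mulr0.
rewrite big1; last by move=> j _; rewrite mulr0.
by move=> /(_ erefl (Ordinal lt)); rewrite eqxx.
Qed.

Definition Gm (F : finFieldType) m (P : {set 'rV[F]_m}) : 'M[F]_(m, #|P|) :=
  \matrix_(j < m, c < #|P|) (enum_val c : 'rV[F]_m) 0 j.

Lemma cP_mul (F : finFieldType) m (P : {set 'rV[F]_m}) v : cP P v = v *m Gm P.
Proof. by apply/rowP => c; rewrite !mxE; apply: eq_bigr => j _; rewrite mxE. Qed.

Lemma ker_iff (F : finFieldType) n (eta : F) m (M : 'I_n -> {set 'I_m}) (v : 'rV[F]_m) :
  #|F| = (2 ^ n)%N -> generates_field eta ->
  v *m Gm (Dstar eta M) = 0 <-> forall j, j \in \bigcup_(i < n) M i -> v 0 j = 0.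
Proof.
move=> HF Heta; split => [H j /bigcupP[i _ ji]|H].
  have Hd : eta ^+ i *: delta_mx 0 j \in Dstar eta M.
    rewrite /Dstar in_setD1 delta_Dset // andbT; apply/negP => /eqP/matrixP/(_ 0 j).
    rewrite !mxE !eqxx mulr1.
    by move=> E; have := eta_neq0 HF Heta (ltn_ord i); rewrite E eqxx.
  have := congr1 (fun w : 'rV[F]_#|Dstar eta M| => w 0 (enum_rank_in Hd (eta ^+ i *: delta_mx 0 j))) H.
  rewrite !mxE /= (eq_bigr (fun j' => v 0 j' * (eta ^+ i *: delta_mx 0 j : 'rV[F]_m) 0 j')); last first.
    by move=> j' _; rewrite mxE enum_rankK_in.
  rewrite (bigD1 j) //= big1 ?addr0; last first.
    by move=> j' /negbTE nj; rewrite !mxE nj mulr0 mulr0.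
  rewrite !mxE !eqxx mulr1 => /eqP; rewrite mulf_eq0 => /orP[/eqP //|].
  by rewrite (negbTE (eta_neq0 HF Heta (ltn_ord i))).
apply/rowP => c; rewrite !mxE big1 // => j _; rewrite mxE.
case: (boolP (j \in \bigcup_(i < n) M i)) => [/H -> | nj]; first by rewrite mul0r.
have : enum_val c \in Dstar eta M by exact: enum_valP.
by rewrite /Dstar in_setD1 => /andP[_ /Dset_supp /(_ nj) ->]; rewrite mulr0.
Qed.

Lemma wt_eq0 (F : finFieldType) N (c : 'rV[F]_N) : (wt c == 0%N) = (c == 0).
Proof.
rewrite /wt cards_eq0; apply/eqP/eqP => [H|->].
  apply/rowP => k; apply/eqP; apply/negPn/negP => nz.
  by move: nz H; rewrite mxE => nz /setP /(_ k); rewrite !inE nz.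
by apply/setP => k; rewrite !inE mxE eqxx.
Qed.

Lemma card_ker_sup (F : finFieldType) m (U : {set 'I_m}) :
  #|[set v : 'rV[F]_m | [forall j in U, v 0 j == 0]]| = (#|F| ^ (m - #|U|))%N.
Proof.
pose T := {j : 'I_m | j \notin U}.
pose psi (g : {ffun T -> F}) : 'rV[F]_m :=
  \row_j (if (insub j : option T) is Some s then g s else 0).
have psi_inj : injective psi.
  move=> g g' E; apply/ffunP => s.
  have := congr1 (fun v : 'rV[F]_m => v 0 (val s)) E; by rewrite !mxE valK.
have -> : [set v : 'rV[F]_m | [forall j in U, v 0 j == 0]] = [set psi g | g in [set: {ffun T -> F}]].
  apply/setP => v; rewrite inE; apply/forallP/imsetP => [H|[g _ ->] j].
    exists [ffun s => v 0 (val s)]; first by rewrite inE.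
    apply/rowP => j; rewrite mxE; case: insubP => [s _ <-|nj]; first by rewrite ffunE.
    have := H j.
    by move: nj; rewrite negbK => -> /eqP.
  apply/implyP => jU; rewrite mxE; case: insubP => [s Hs _|//].
  by rewrite jU in Hs.
rewrite card_imset // cardsT card_ffun card_sig.
congr (_ ^ _)%N.
have E : (#|U| + #|[pred x | x \notin U]|)%N = m.
  by rewrite -[RHS]card_ord -(cardC U); congr (_ + _)%N; apply: eq_card.
rewrite -[X in (X - _)%N]E addKn; apply: eq_card => x; by rewrite !inE.
Qed.

Lemma fiber_card (F : finFieldType) m N (G : 'M[F]_(m, N)) (c : 'rV[F]_N) :
  c \in [set v *m G | v : 'rV[F]_m] ->
  #|[set v : 'rV[F]_m | v *m G == c]| = #|[set v : 'rV[F]_m | v *m G == 0]|.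
Proof.
case/imsetP => v0 _ ->.
have -> : [set v : 'rV[F]_m | v *m G == v0 *m G] =
          [set u + v0 | u in [set u : 'rV[F]_m | u *m G == 0]].
  apply/setP => v; rewrite inE; apply/eqP/imsetP => [E|[u Hu ->]].
    by exists (v - v0); rewrite ?inE ?mulmxBl ?E ?subrr ?subrK.
  by move: Hu; rewrite inE mulmxDl => /eqP ->; rewrite add0r.
by rewrite card_imset //; exact: addIr.
Qed.

Lemma count_part (F : finFieldType) m N (G : 'M[F]_(m, N)) (Q : pred 'rV[F]_N) :
  #|[set v : 'rV[F]_m | Q (v *m G)]| =
  (#|[set c in [set v *m G | v : 'rV[F]_m] | Q c]| * #|[set v : 'rV[F]_m | v *m G == 0%R]|)%N.
Proof.
rewrite -sum1_card (partition_big (fun v => v *m G) (mem [set c in [set v *m G | v : 'rV[F]_m] | Q c])) /=; last first.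
  by move=> v; rewrite !inE => Qv; rewrite Qv andbT; apply/imsetP; exists v.
rewrite -sum_nat_const; apply: eq_bigr => c; rewrite inE => /andP[Hc Qc].
rewrite -(fiber_card Hc) -sum1_card; apply: eq_bigl => v; rewrite !inE.
by case: eqP => [->|]; rewrite ?Qc ?andbF.
Qed.

Definition Em (F : finFieldType) m (U : {set 'I_m}) : 'M[F]_(#|U|, m) :=
  \matrix_(i < #|U|, j < m) ((enum_val i : 'I_m) == j)%:R.

Lemma Em_val (F : finFieldType) m (U : {set 'I_m}) (x : 'rV[F]_#|U|) (i : 'I_#|U|) :
  (x *m Em F U) 0 (enum_val i) = x 0 i.
Proof.
rewrite mxE (bigD1 i) //= big1 ?addr0; first by rewrite mxE eqxx mulr1.
by move=> i' ni; rewrite mxE (inj_eq enum_val_inj) (negbTE ni) mulr0.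
Qed.

Lemma Em_proj (F : finFieldType) m (U : {set 'I_m}) (v : 'rV[F]_m) :
  exists x : 'rV[F]_#|U|, forall j, j \in U -> (x *m Em F U) 0 j = v 0 j.
Proof.
exists (\row_i v 0 (enum_val i)) => j jU.
by rewrite -(enum_rankK_in jU jU) Em_val mxE.
Qed.

Lemma mxsubE (F : finFieldType) p q (A B : 'M[F]_(p, q)) i j : (A - B) i j = A i j - B i j.
Proof. by rewrite !mxE. Qed.

Unset Implicit Arguments. Set Strict Implicit.

Theorem mainTheorem5 (F : finFieldType) (n : nat) (eta : F)
  (HF : #|F| = (2 ^ n)%N) (Heta : generates_field eta)
  (m : nat) (M : 'I_n -> {set 'I_m})
  (HM : forall i, M i != set0 /\ M i \proper [set: 'I_m]) :
  let Ds := Dstar eta M in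
  let C := codeP Ds in
  let k := #|\bigcup_(j < n) M j| in
  let A := fun i : nat => #|[set c in C | wt c == i]| in
  let Z := fun i : nat => #|[set v : 'rV[F]_m | wt (cP Ds v) == i]| in
  (* C is a linear code of length 2^(sum |M_j|) - 1 and dimension k *)
  #|Ds| = (2 ^ (\sum_(j < n) #|M j|) - 1)%N /\
  (exists B : 'M[F]_(k, #|Ds|), row_free B /\ forall c, (c \in C) = (c <= B)%MS) /\
  (* weight distribution *)
  Z 0%N = (2 ^ (n * (m - k)))%N /\
  (forall i : nat, (1 <= i <= #|Ds|)%N -> Z i = (Z 0%N * A i)%N).
Proof.
move=> Ds C k A Z.
set U := \bigcup_(j < n) M j.
pose G := Gm Ds.
have HC : C = [set v *m G | v : 'rV[F]_m].
  by rewrite /C /codeP; apply: eq_imset => v; rewrite cP_mul.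
have HZ : forall i, Z i = #|[set v : 'rV[F]_m | wt (v *m G) == i]|.
  by move=> i; rewrite /Z; apply: eq_card => v; rewrite !inE cP_mul.
have Hker : forall v : 'rV[F]_m, v *m G = 0 <-> forall j, j \in U -> v 0 j = 0.
  by move=> v; exact: ker_iff.
have HZ0 : Z 0%N = #|[set v : 'rV[F]_m | v *m G == 0]|.
  by rewrite HZ; apply: eq_card => v; rewrite !inE wt_eq0.
split; first exact: card_Ds.
split.
  exists (Em F U *m G); split.
    apply: inj_row_free => x; rewrite mulmxA => /Hker H.
    by apply/rowP => i; rewrite mxE -Em_val; apply: H; exact: enum_valP.
  move=> c; rewrite HC; apply/imsetP/submxP => [[v _ ->]|[x ->]].
    have [x Hx] := Em_proj U v; exists x; rewrite mulmxA.
    apply/eqP; rewrite -subr_eq0 -mulmxBl; apply/eqP/Hker => j jU.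
    by rewrite mxsubE Hx // subrr.
  by exists (x *m Em F U) => //; rewrite mulmxA.
split.
  rewrite HZ0.
  have -> : [set v : 'rV[F]_m | v *m G == 0] =
            [set v : 'rV[F]_m | [forall j in U, v 0 j == 0]].
    apply/setP => v; rewrite !inE; apply/eqP/forallP => [/Hker H j|H].
      by apply/implyP => /H ->.
    by apply/Hker => j jU; apply/eqP; have := H j; rewrite jU.
  by rewrite card_ker_sup HF -expnM.
move=> i _; rewrite HZ HZ0 (count_part G (fun c => wt c == i)) mulnC /A HC.
by [].
Qed.
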